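(* Among the intervals in $\mathcal{M}_\alpha$, the fiducial interval minimizes the expected length for all $\theta\in\Theta$ as well as the length for all $x\in\mathcal{X}$.
   Context: $\Theta$ is a connected open subset of $\mathbb{R}$, $\mathcal{X}\subseteq\mathbb{Z}$ consists of consecutive integers, $\mathrm{P}_\theta$ denotes probability under $P_\theta$, satisfying (A1) $\mathrm{P}_\theta(X=x)>0$ for all $(\theta,x)$; (A2) $\mathrm{P}_\theta(X\leq x)$ strictly decreasing in $\theta$ for each fixed $x\in\mathcal{X}\backslash\sup\mathcal{X}$; (A3) $\mathrm{P}_\theta(X=x)$ differentiable in $\theta$. $\mathcal{M}_\alpha$ is the class of confidence intervals $(L_{\alpha/2}(x),U_{\alpha/2}(x))$ satisfying (D1) $L_{\alpha/2}(x)\leq L_{\alpha/2}(x+1)$ and $U_{\alpha/2}(x)\leq U_{\alpha/2}(x+1)$; (D2) $\inf_{\theta}\mathrm{P}_\theta(L_{\alpha/2}(X)\leq\theta)\geq 1-\alpha/2$ and $\inf_\theta\mathrm{P}_\theta(U_{\alpha/2}(X)\geq\theta)\geq 1-\alpha/2$; (D3) the interval only depends on $x$, $\alpha$ and $P_\theta$. The fiducial interval is $(\theta_L,\theta_U)$ with $\sum_{k\leq x}\mathrm{P}_{\theta_L}(X=k)=\alpha/2$ and $\sum_{k\geq x}\mathrm{P}_{\theta_U}(X=k)=\alpha/2$. Length is $U_{\alpha/2}(x)-L_{\alpha/2}(x)$; expected length is $\sum_k\mathrm{P}_\theta(X=k)(U_{\alpha/2}(k)-L_{\alpha/2}(k))$.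 *)

(* Defs.v *)
From HB Require Import structures.
From mathcomp Require Import all_boot all_order all_algebra.
From mathcomp Require Import all_classical all_reals all_analysis.
Set Implicit Arguments. Unset Strict Implicit. Unset Printing Implicit Defensive.
Import Order.TTheory GRing.Theory Num.Theory.
Import numFieldNormedType.Exports.
Local Open Scope classical_set_scope.
Local Open Scope ring_scope.

(* The sample space X is a set of integers; P_theta is given by its pmf
   p theta : int -> R on X.  Probability of an event E under P_theta: *)
Definition Pr {R : realType} (X : set int) (p : R -> int -> R) (th : R)
  (E : set int) : \bar R := \esum_(k in X `&` E) (p th k)%:E.

Definition consecutive (X : set int) : Prop :=
  forall a b c : int, X a -> X c -> (a <= b <= c)%R -> X b.

Definition is_max (X : set int) (x : int) : Prop := X x /\ forall y, X y -> y <= x.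
Definition is_min (X : set int) (x : int) : Prop := X x /\ forall y, X y -> x <= y.

Definition discrete_model {R : realType} (Theta : set R) (X : set int)
  (p : R -> int -> R) : Prop :=
  [/\ (open Theta /\ connected Theta /\ Theta !=set0) /\
        (X !=set0 /\ consecutive X),
      (forall th, Theta th -> Pr X p th setT = 1%E),
      (forall th x, Theta th -> X x -> 0 < p th x),
      (forall x, X x -> ~ is_max X x ->
         forall t1 t2, Theta t1 -> Theta t2 -> t1 < t2 ->
           (Pr X p t2 [set k : int | (k <= x)%R] < Pr X p t1 [set k : int | (k <= x)%R])%E) &
      (forall x, X x -> forall th, Theta th -> derivable (fun t => p t x) th 1)].

(* The class M_alpha: (L, U) with values in the extended reals,
   depending only on x (D3), monotone (D1), with one-sided coverage (D2). *)
Definition in_M {R : realType} (Theta : set R) (X : set int) (p : R -> int -> R)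
  (alpha : R) (L U : int -> \bar R) : Prop :=
  [/\
      (forall x, X x -> X (x + 1)%R -> (L x <= L (x + 1)%R)%E /\ (U x <= U (x + 1)%R)%E),
      ((1 - alpha / 2)%:E <=
         ereal_inf [set Pr X p th [set k : int | (L k <= th%:E)%E] | th in Theta])%E &
      ((1 - alpha / 2)%:E <=
         ereal_inf [set Pr X p th [set k : int | (th%:E <= U k)%E] | th in Theta])%E].

Definition ilength {R : realType} (L U : int -> \bar R) (x : int) : \bar R :=
  (U x - L x)%E.

(* Expected length sum_k P_theta(X = k) (U k - L k), as the difference of the
   sums of the positive and negative parts. *)
Definition exp_length {R : realType} (X : set int) (p : R -> int -> R) (th : R)
  (L U : int -> \bar R) : \bar R :=
  let g := fun k => ((p th k)%:E * ilength L U k)%E in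
  (\esum_(k in X) g^\+ k - \esum_(k in X) g^\- k)%E.

(* The fiducial interval (thL, thU):
   thL x solves  sum_{k >= x} P_thL(X = k) = alpha/2,
   thU x solves  sum_{k <= x} P_thU(X = k) = alpha/2,
   with the boundary conventions thL (min X) = inf Theta and
   thU (max X) = sup Theta (where the equation has no solution). *)
Definition is_fiducial {R : realType} (Theta : set R) (X : set int)
  (p : R -> int -> R) (alpha : R) (thL thU : int -> \bar R) : Prop :=
  forall x, X x ->
    (if `[< is_min X x >] then thL x = ereal_inf (EFin @` Theta)
     else exists t, [/\ Theta t, thL x = t%:E &
                        Pr X p t [set k : int | (x <= k)%R] = (alpha / 2)%:E]) /\
    (if `[< is_max X x >] then thU x = ereal_sup (EFin @` Theta)
     else exists t, [/\ Theta t, thU x = t%:E &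
                        Pr X p t [set k : int | (k <= x)%R] = (alpha / 2)%:E]).

(* Main.v *)
Require Import Defs.
From HB Require Import structures.
From mathcomp Require Import all_boot all_order all_algebra.
From mathcomp Require Import all_classical all_reals all_analysis.
From mathcomp Require Import zify ring lra.
From mathcomp Require Import finmap.
Import Order.TTheory GRing.Theory Num.Theory.
Import numFieldNormedType.Exports.
Local Open Scope classical_set_scope.
Local Open Scope ring_scope.
Set Implicit Arguments. Unset Strict Implicit.

Lemma open_ball_ex (R : realType) (T : set R) t : open T -> T t ->
  exists2 d : R, 0 < d & forall y, `|t - y| < d -> T y.
Proof.
move=> oT Tt. have := oT t Tt. move=> /nbhs_ballP[e e0 He]. exists e => //.
Qed.

Lemma Pr_ge0 (R : realType) (X : set int) (p : R -> int -> R) th E :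
  (forall k, X k -> 0 <= p th k) -> (0 <= Pr X p th E)%E.
Proof. by move=> h; apply: esum_ge0 => k [Xk _]; rewrite lee_fin h. Qed.

Lemma Pr_le (R : realType) (X : set int) (p : R -> int -> R) th E F :
  (forall k, X k -> 0 <= p th k) -> (forall k, X k -> E k -> F k) ->
  (Pr X p th E <= Pr X p th F)%E.
Proof.
move=> h EF; rewrite /Pr !esum_mkcondr; apply: le_esum => k Xk.
case: ifPn => Ek; first by rewrite ifT //; apply/mem_set/EF => //; exact: set_mem.
by case: ifP => _ //; rewrite lee_fin h.
Qed.

Lemma Pr_split (R : realType) (X : set int) (p : R -> int -> R) th E B :
  (forall k, X k -> 0 <= p th k) ->
  Pr X p th E = (Pr X p th (E `&` B) + Pr X p th (E `&` ~` B))%E.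
Proof.
move=> h; rewrite /Pr (esumID B); last by move=> k [Xk _]; rewrite lee_fin h.
by rewrite !setIA.
Qed.

Lemma Pr_ext (R : realType) (X : set int) (p : R -> int -> R) th E F :
  (forall k, X k -> (E k <-> F k)) -> Pr X p th E = Pr X p th F.
Proof.
move=> h; rewrite /Pr; congr esum; apply/seteqP; split => k [Xk Ek]; split => //;
  by apply/(h k Xk).
Qed.

Lemma Pr_point (R : realType) (X : set int) (p : R -> int -> R) th E x :
  (forall k, X k -> 0 <= p th k) -> X x ->
  (forall k, X k -> (E k <-> k = x)) -> Pr X p th E = (p th x)%:E.
Proof.
move=> h Xx hE; rewrite /Pr (_ : X `&` E = [set x]) ?esum_set1 ?lee_fin ?h //.
apply/seteqP; split => k /=; first by move=> [Xk /(hE k Xk)].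
by move=> ->; split => //; apply/(hE x Xx).
Qed.

Lemma Pr0 (R : realType) (X : set int) (p : R -> int -> R) th E :
  (forall k, X k -> ~ E k) -> Pr X p th E = 0%E.
Proof. by move=> h; rewrite /Pr esum1 // => k [Xk Ek]; case: (h k Xk). Qed.

Definition Q (R : realType) (X : set int) (p : R -> int -> R) th E : R :=
  fine (Pr X p th E).

Lemma model_pos (R : realType) Theta X (p : R -> int -> R) :
  discrete_model Theta X p -> forall th, Theta th -> forall k, X k -> 0 <= p th k.
Proof. by case=> _ _ A1 _ _ th Ht k Xk; apply/ltW/A1. Qed.

Lemma Q_prop (R : realType) Theta X (p : R -> int -> R) th E :
  discrete_model Theta X p -> Theta th ->
  [/\ Pr X p th E = (Q X p th E)%:E, 0 <= Q X p th E &
      Q X p th E + Q X p th (~` E) = 1].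
Proof.
move=> M Ht; have h := model_pos M Ht.
have tot : Pr X p th setT = 1%E by case: M => _ Pt _ _ _; exact: Pt.
have := Pr_split setT E h; rewrite !setTI tot => e1.
have a0 := Pr_ge0 E h; have b0 := Pr_ge0 (~` E) h.
have afin : Pr X p th E \is a fin_num.
  rewrite ge0_fin_numE //; apply: (@le_lt_trans _ _ 1%E); last by rewrite ltry.
  by rewrite e1 leeDl.
have bfin : Pr X p th (~` E) \is a fin_num.
  rewrite ge0_fin_numE //; apply: (@le_lt_trans _ _ 1%E); last by rewrite ltry.
  by rewrite e1 leeDr.
split; first by rewrite /Q fineK.
  by rewrite /Q fine_ge0.
move: e1; rewrite -(fineK afin) -(fineK bfin) -EFinD => -[H].
by rewrite /Q H.
Qed.

Lemma seq_min (s : seq int) : s != [::] ->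
  exists m, m \in s /\ forall a, a \in s -> m <= a.
Proof.
elim: s => [//|a s IH] _; case: (eqVneq s [::]) => [->|ns].
  by exists a; split => [|b]; rewrite ?mem_seq1 ?inE // => /eqP ->.
have [m [ms hm]] := IH ns; case: (lerP a m) => am.
  exists a; split; first by rewrite inE eqxx.
  move=> b; rewrite inE => /orP[/eqP ->//|/hm]; exact: le_trans.
exists m; split; first by rewrite inE ms orbT.
by move=> b; rewrite inE => /orP[/eqP ->|/hm//]; exact: ltW.
Qed.

Lemma seq_max (s : seq int) : s != [::] ->
  exists m, m \in s /\ forall a, a \in s -> a <= m.
Proof.
elim: s => [//|a s IH] _; case: (eqVneq s [::]) => [->|ns].
  by exists a; split => [|b]; rewrite ?mem_seq1 ?inE // => /eqP ->.
have [m [ms hm]] := IH ns; case: (lerP m a) => am.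
  exists a; split; first by rewrite inE eqxx.
  move=> b; rewrite inE => /orP[/eqP ->//|/hm] h; exact: le_trans h am.
exists m; split; first by rewrite inE ms orbT.
by move=> b; rewrite inE => /orP[/eqP ->|/hm//]; exact: ltW.
Qed.

Lemma finite_min (A : set int) : finite_set A -> A !=set0 ->
  exists m, A m /\ forall a, A a -> m <= a.
Proof.
move=> /finite_fsetP [F ->] [a Fa].
have : enum_fset F != [::] by apply/eqP => e; move: Fa => /=; rewrite -[a \in F]/(a \in enum_fset F) e.
by move=> /seq_min [m [ms hm]]; exists m; split => // b Fb; apply: hm.
Qed.

Lemma finite_max (A : set int) : finite_set A -> A !=set0 ->
  exists m, A m /\ forall a, A a -> a <= m.
Proof.
move=> /finite_fsetP [F ->] [a Fa].
have : enum_fset F != [::] by apply/eqP => e; move: Fa => /=; rewrite -[a \in F]/(a \in enum_fset F) e.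
by move=> /seq_max [m [ms hm]]; exists m; split => // b Fb; apply: hm.
Qed.

Section Model.
Variables (R : realType) (Theta : set R) (X : set int) (p : R -> int -> R).
Hypothesis M : discrete_model Theta X p.

Let cX : consecutive X. Proof. by case: M => [[_ [_ c]]] _ _ _ _. Qed.

Lemma QE th E : Theta th -> Pr X p th E = (Q X p th E)%:E.
Proof. by move=> Ht; case: (Q_prop E M Ht). Qed.

Lemma Q_ge0 th E : Theta th -> 0 <= Q X p th E.
Proof. by move=> Ht; case: (Q_prop E M Ht). Qed.

Lemma Q_compl th E : Theta th -> Q X p th E + Q X p th (~` E) = 1.
Proof. by move=> Ht; case: (Q_prop E M Ht). Qed.

Lemma Q_le th E F : Theta th -> (forall k, X k -> E k -> F k) ->
  Q X p th E <= Q X p th F.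
Proof.
move=> Ht EF; rewrite -lee_fin -!QE //; exact: Pr_le (model_pos M Ht) EF.
Qed.

Lemma Q_ext th E F : (forall k, X k -> (E k <-> F k)) -> Q X p th E = Q X p th F.
Proof. by move=> h; rewrite /Q (Pr_ext _ _ h). Qed.

Lemma Q_split th E B : Theta th ->
  Q X p th E = Q X p th (E `&` B) + Q X p th (E `&` ~` B).
Proof.
move=> Ht; apply/EFin_inj; rewrite EFinD -!QE //; exact: Pr_split (model_pos M Ht).
Qed.

Definition Fc th x := Q X p th [set k : int | (k <= x)%R].
Definition Gc th x := Q X p th [set k : int | (x <= k)%R].

Lemma G_F th x : Theta th -> Gc th (x + 1) = 1 - Fc th x.
Proof.
move=> Ht; have h := Q_compl [set k : int | (k <= x)%R] Ht; rewrite /Gc /Fc.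
suff -> : Q X p th [set k : int | (x + 1 <= k)%R] =
  Q X p th (~` [set k : int | (k <= x)%R]) by lra.
apply: Q_ext => k _ /=; split; lia.
Qed.

Lemma F_point th x : Theta th -> X x -> Fc th x = Fc th (x - 1) + p th x.
Proof.
move=> Ht Xx; rewrite /Fc (Q_split _ [set k : int | (k <= x - 1)%R] Ht); congr (_ + _).
  by apply: Q_ext => k _ /=; split; [case|]; lia.
rewrite /Q (Pr_point (model_pos M Ht) Xx) //.
by move=> k _ /=; split; [case; lia| move=> ->; split; lia].
Qed.

Lemma F_decr x t1 t2 : X x -> ~ is_max X x -> Theta t1 -> Theta t2 -> t1 < t2 ->
  Fc t2 x < Fc t1 x.
Proof.
move=> Xx nm T1 T2 lt; rewrite -lte_fin /Fc -!QE //.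
by case: M => _ _ _ A2 _; apply: A2.
Qed.

Lemma notmin_pred x : X x -> ~ is_min X x -> X (x - 1).
Proof.
move=> Xx nm; have [y [Xy ylt]] : exists y, X y /\ y < x.
  apply: contra_notP nm => h; split => // y Xy; rewrite leNgt.
  by apply/negP => yx; apply: h; exists y.
by apply: (cX Xy Xx); apply/andP; split; lia.
Qed.

Lemma notmax_succ x : X x -> ~ is_max X x -> X (x + 1).
Proof.
move=> Xx nm; have [y [Xy ylt]] : exists y, X y /\ x < y.
  apply: contra_notP nm => h; split => // y Xy; rewrite leNgt.
  by apply/negP => yx; apply: h; exists y.
by apply: (cX Xx Xy); apply/andP; split; lia.
Qed.

Lemma pred_notmax x : X x -> ~ is_max X (x - 1).
Proof. by move=> Xx [_ h]; have := h x Xx; lia. Qed.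

Lemma succ_notmin x : X x -> ~ is_min X (x + 1).
Proof. by move=> Xx [_ h]; have := h x Xx; lia. Qed.

Lemma mono_X (f : int -> \bar R) :
  (forall x, X x -> X (x + 1) -> (f x <= f (x + 1)%R)%E) ->
  forall x k, X x -> X k -> x <= k -> (f x <= f k)%E.
Proof.
move=> hf x k Xx Xk xk.
have [n hn] : exists n : nat, k - x = n%:Z.
  by exists `|k - x|%N; rewrite abszE ger0_norm //; lia.
elim: n k Xk xk hn => [|n IH] k Xk xk hn.
  by have -> : k = x by lia.
have Xk1 : X (k - 1) by apply: (cX Xx Xk); apply/andP; split; lia.
apply: (le_trans (IH (k - 1) Xk1 _ _)); [lia|lia|].
have := hf (k - 1) Xk1; rewrite subrK; exact.
Qed.

Lemma lower_opt alpha thL thU L U : 0 < alpha < 1 ->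
  is_fiducial Theta X p alpha thL thU -> in_M Theta X p alpha L U ->
  forall x, X x -> (L x <= thL x)%E.
Proof.
move=> ha fid [D1 D2L D2U] x Xx.
have oT : open Theta by have [ [ [oo _] _] _ _ _ _] := M.
have cov : forall th, Theta th ->
    ((1 - alpha/2)%:E <= Pr X p th [set k | (L k <= th%:E)%E])%E.
  move=> th Ht; apply: le_trans D2L _; apply: ereal_inf_lbound; by exists th.
have Lmono := mono_X (f:=L) (fun x a b => (D1 x a b).1).
rewrite leNgt; apply/negP => lt.
have [hL _] := fid x Xx.
case: asboolP hL => [mn Em|nm [t [Tt Et Gt]]].
  rewrite Em in lt; move: lt => /ereal_inf_lt [_ [th Ht <-] thlt].
  have := cov th Ht; rewrite Pr0.
    rewrite lee_fin; lra.
  move=> k Xk /=; have le := Lmono x k Xx Xk (mn.2 k Xk).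
  by apply/negP; rewrite -ltNge; apply: lt_le_trans thlt le.
rewrite Et in lt.
have [d d0 hd] := open_ball_ex oT Tt.
have [th [Ht tth thLx]] : exists th, [/\ Theta th, t < th & (th%:E < L x)%E].
  move: lt; case: (L x) => [l| |] /= lt'.
  - rewrite lte_fin in lt'; case: (lerP d (l - t)) => dl.
      exists (t + d / 2); split; rewrite ?lte_fin; try lra.
      by apply: hd; rewrite distrC ger0_norm; lra.
    exists (t + (l - t) / 2); split; rewrite ?lte_fin; try lra.
    by apply: hd; rewrite distrC ger0_norm; lra.
  - exists (t + d / 2); split; rewrite ?ltry; try lra.
    by apply: hd; rewrite distrC ger0_norm; lra.
  - by [].
have X1 := notmin_pred Xx nm.
have hG : Gc t x = alpha / 2.
  by apply/EFin_inj; rewrite -Gt /Gc -QE.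
have := G_F (x - 1) Tt; rewrite subrK hG => hF.
have := F_decr X1 (pred_notmax Xx) Tt Ht tth.
have := cov th Ht; rewrite QE // lee_fin => c1.
have : Q X p th [set k | (L k <= th%:E)%E] <= Fc th (x - 1).
  apply: Q_le => // k Xk /= Lk; rewrite leNgt; apply/negP => xk.
  have := Lmono x k Xx Xk ltac:(lia) => le.
  by move: (le_lt_trans (le_trans le Lk) thLx); rewrite ltxx.
lra.
Qed.

Lemma upper_opt alpha thL thU L U : 0 < alpha < 1 ->
  is_fiducial Theta X p alpha thL thU -> in_M Theta X p alpha L U ->
  forall x, X x -> (thU x <= U x)%E.
Proof.
move=> ha fid [D1 D2L D2U] x Xx.
have oT : open Theta by have [ [ [oo _] _] _ _ _ _] := M.
have cov : forall th, Theta th ->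
    ((1 - alpha/2)%:E <= Pr X p th [set k | (th%:E <= U k)%E])%E.
  move=> th Ht; apply: le_trans D2U _; apply: ereal_inf_lbound; by exists th.
have Umono := mono_X (f:=U) (fun x a b => (D1 x a b).2).
rewrite leNgt; apply/negP => lt.
have [_ hU] := fid x Xx.
case: asboolP hU => [mx Em|nm [t [Tt Et Ft]]].
  rewrite Em in lt; move: lt => /ereal_sup_gt [_ [th Ht <-] thlt].
  have := cov th Ht; rewrite Pr0.
    rewrite lee_fin; lra.
  move=> k Xk /=; have le := Umono k x Xk Xx (mx.2 k Xk).
  by apply/negP; rewrite -ltNge; apply: le_lt_trans le thlt.
rewrite Et in lt.
have [d d0 hd] := open_ball_ex oT Tt.
have [th [Ht tth thUx]] : exists th, [/\ Theta th, th < t & (U x < th%:E)%E].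
  move: lt; case: (U x) => [u| |] /= lt'.
  - rewrite lte_fin in lt'; case: (lerP d (t - u)) => dl.
      exists (t - d / 2); split; rewrite ?lte_fin; try lra.
      by apply: hd; rewrite ger0_norm; lra.
    exists (t - (t - u) / 2); split; rewrite ?lte_fin; try lra.
    by apply: hd; rewrite ger0_norm; lra.
  - by [].
  - exists (t - d / 2); split; rewrite ?ltNyr; try lra.
    by apply: hd; rewrite ger0_norm; lra.
have hF : Fc t x = alpha / 2.
  by apply/EFin_inj; rewrite -Ft /Fc -QE.
have := G_F (x) Ht => hG.
have := F_decr Xx nm Ht Tt tth.
have := cov th Ht; rewrite QE // lee_fin => c1.
have : Q X p th [set k | (th%:E <= U k)%E] <= Gc th (x + 1).
  apply: Q_le => // k Xk /= Uk; rewrite leNgt; apply/negP => xk.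
  have := Umono k x Xk Xx ltac:(lia) => le.
  by move: (le_lt_trans (le_trans Uk le) thUx); rewrite ltxx.
lra.
Qed.

Lemma fid_mono alpha thL thU : 0 < alpha < 1 ->
  is_fiducial Theta X p alpha thL thU ->
  forall x, X x -> X (x + 1) ->
    (thL x <= thL (x + 1)%R)%E /\ (thU x <= thU (x + 1)%R)%E.
Proof.
move=> ha fid x Xx Xx1.
have [_ _ A1 _ _] := M.
have [hL0 hU0] := fid x Xx; have [hL1 hU1] := fid (x + 1) Xx1.
split.
  case: asboolP hL1 => [mn|_ [s [Ts Es Gs]]]; first by case: (succ_notmin Xx mn).
  rewrite Es; case: asboolP hL0 => [mn ->|nm [t [Tt Et Gt]]].
    by apply: ereal_inf_lbound; exists s.
  rewrite Et lee_fin leNgt; apply/negP => st.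
  have X1 := notmin_pred Xx nm.
  have hGt : Gc t x = alpha / 2 by apply/EFin_inj; rewrite -Gt /Gc -QE.
  have hGs : Gc s (x + 1) = alpha / 2 by apply/EFin_inj; rewrite -Gs /Gc -QE.
  have := G_F (x - 1) Tt; rewrite subrK hGt => e1.
  have := G_F (x - 1) Ts; rewrite subrK => e2.
  have := G_F x Ts; rewrite hGs => e3.
  have := F_point Ts Xx => e4.
  have := F_decr X1 (pred_notmax Xx) Ts Tt st.
  have := A1 s x Ts Xx.
  lra.
case: asboolP hU0 => [mx|_ [t [Tt Et Ft]]]; first by case: mx => _ /(_ _ Xx1); lia.
rewrite Et; case: asboolP hU1 => [mx ->|nm [s [Ts Es Fs]]].
  by apply: ereal_sup_ubound; exists t.
rewrite Es lee_fin leNgt; apply/negP => st.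
have hFt : Fc t x = alpha / 2 by apply/EFin_inj; rewrite -Ft /Fc -QE.
have hFs : Fc s (x + 1) = alpha / 2 by apply/EFin_inj; rewrite -Fs /Fc -QE.
have := F_point Tt Xx1; rewrite addrK => e1.
have := F_decr Xx1 nm Ts Tt st.
have := A1 t (x + 1) Tt Xx1.
lra.
Qed.

Lemma fid_covL alpha thL thU : 0 < alpha < 1 ->
  is_fiducial Theta X p alpha thL thU ->
  ((1 - alpha / 2)%:E <=
     ereal_inf [set Pr X p th [set k : int | (thL k <= th%:E)%E] | th in Theta])%E.
Proof.
move=> ha fid; apply: le_ereal_inf_tmp => _ [th Ht <-].
set E := [set k : int | (thL k <= th%:E)%E].
suff : Q X p th (~` E) <= alpha / 2.
  by have := Q_compl E Ht; rewrite QE // lee_fin; lra.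
rewrite -lee_fin -QE // /Pr /esum; apply: ge_ereal_sup => _ [A [finA AS] <-].
have [->|nA] := eqVneq A set0; first by rewrite fsbig_set0 lee_fin; lra.
have nA' : A !=set0 by apply/set0P.
have [m [Am hm]] := finite_min finA nA'.
have [Xm nEm] := AS m Am.
have [hL _] := fid m Xm.
case: asboolP hL => [mn Em|nm [t [Tt Et Gt]]].
  by case: nEm; rewrite /E /= Em; apply: ereal_inf_lbound; exists th.
have tht : th < t by move: nEm; rewrite /E /= Et lee_fin ltNge => /negP.
have hGt : Gc t m = alpha / 2 by apply/EFin_inj; rewrite -Gt /Gc -QE.
have X1 := notmin_pred Xm nm.
have := G_F (m - 1) Tt; rewrite subrK hGt => e1.
have := G_F (m - 1) Ht; rewrite subrK => e2.
have := F_decr X1 (pred_notmax Xm) Ht Tt tht => e3.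
apply: (@le_trans _ _ (Pr X p th [set k : int | (m <= k)%R])).
  apply: esum_ge; exists A => //; split => // a Aa; split; first by case: (AS a Aa).
  exact: hm.
rewrite QE // lee_fin -/(Gc th m); lra.
Qed.

Lemma fid_covU alpha thL thU : 0 < alpha < 1 ->
  is_fiducial Theta X p alpha thL thU ->
  ((1 - alpha / 2)%:E <=
     ereal_inf [set Pr X p th [set k : int | (th%:E <= thU k)%E] | th in Theta])%E.
Proof.
move=> ha fid; apply: le_ereal_inf_tmp => _ [th Ht <-].
set E := [set k : int | (th%:E <= thU k)%E].
suff : Q X p th (~` E) <= alpha / 2.
  by have := Q_compl E Ht; rewrite QE // lee_fin; lra.
rewrite -lee_fin -QE // /Pr /esum; apply: ge_ereal_sup => _ [A [finA AS] <-].
have [->|nA] := eqVneq A set0; first by rewrite fsbig_set0 lee_fin; lra.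
have nA' : A !=set0 by apply/set0P.
have [m [Am hm]] := finite_max finA nA'.
have [Xm nEm] := AS m Am.
have [_ hU] := fid m Xm.
case: asboolP hU => [mx Em|nm [t [Tt Et Ft]]].
  by case: nEm; rewrite /E /= Em; apply: ereal_sup_ubound; exists th.
have tht : t < th by move: nEm; rewrite /E /= Et lee_fin ltNge => /negP.
have hFt : Fc t m = alpha / 2 by apply/EFin_inj; rewrite -Ft /Fc -QE.
have := F_decr Xm nm Tt Ht tht => e3.
apply: (@le_trans _ _ (Pr X p th [set k : int | (k <= m)%R])).
  apply: esum_ge; exists A => //; split => // a Aa; split; first by case: (AS a Aa).
  exact: hm.
rewrite QE // lee_fin -/(Fc th m); lra.
Qed.

End Model.

Lemma explen_mono (R : realType) (X : set int) (p : R -> int -> R) th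
  (L1 U1 L2 U2 : int -> \bar R) :
  (forall k, X k -> 0 <= p th k) ->
  (forall k, X k -> (ilength L1 U1 k <= ilength L2 U2 k)%E) ->
  (exp_length X p th L1 U1 <= exp_length X p th L2 U2)%E.
Proof.
move=> h hl; rewrite /exp_length; apply: leeB; apply: le_esum => k Xk;
  rewrite ?funeposE ?funenegE; apply: le_max2 => //.
  by apply: lee_wpmul2l; rewrite ?lee_fin ?h ?hl.
by rewrite leeN2; apply: lee_wpmul2l; rewrite ?lee_fin ?h ?hl.
Qed.

Unset Implicit Arguments.

Theorem proposition10 (R : realType) (Theta : set R) (X : set int)
  (p : R -> int -> R) (alpha : R) (thL thU : int -> \bar R) :
  discrete_model Theta X p -> 0 < alpha < 1 ->
  is_fiducial Theta X p alpha thL thU ->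
  [/\ in_M Theta X p alpha thL thU,
      (forall L U, in_M Theta X p alpha L U ->
         forall th, Theta th ->
           (exp_length X p th thL thU <= exp_length X p th L U)%E) &
      (forall L U, in_M Theta X p alpha L U ->
         forall x, X x -> (ilength thL thU x <= ilength L U x)%E)].
Proof.
move=> M ha fid.
have hlen : forall L U, in_M Theta X p alpha L U ->
    forall x, X x -> (ilength thL thU x <= ilength L U x)%E.
  move=> L U hM x Xx; rewrite /ilength; apply: leeB.
    exact: (upper_opt M ha fid hM).
  exact: (lower_opt M ha fid hM).
split => //.
  split; [exact: (fid_mono M ha fid)|exact: (fid_covL M ha fid)|exact: (fid_covU M ha fid)].
move=> L U hM th Ht; apply: explen_mono; first exact: (model_pos M Ht).
exact: hlen.
Qed.
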